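(* The function \[ F(x)=\frac{2\sqrt2+(1+x)^{1/2}}{(1-x)^{1/2}}\arccos x \] is strictly decreasing on $(0,1)$. Consequently, for all $x\in(0,1)$, \[ \frac{6(1-x)^{1/2}}{2\sqrt2+(1+x)^{1/2}}<\arccos x<\frac{\bigl(\frac12+\sqrt2\bigr)\pi\,(1-x)^{1/2}}{2\sqrt2+(1+x)^{1/2}}, \] and the constants $6$ and $\bigl(\frac12+\sqrt2\bigr)\pi$ are the best possible (i.e. $6$ cannot be replaced by a larger constant and $(\frac12+\sqrt2)\pi$ cannot be replaced by a smaller constant).
   Context: $\arccos$ denotes the principal inverse cosine with values in $[0,\pi]$. *)

(* Defs.v *)
From Stdlib Require Import Reals.
Open Scope R_scope.

Definition F3 (x : R) : R :=
  (2 * sqrt 2 + sqrt (1 + x)) / sqrt (1 - x) * acos x.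

(* common factor (1-x)^(1/2) / (2 sqrt 2 + (1+x)^(1/2)) in the bounds *)
Definition g3 (x : R) : R :=
  sqrt (1 - x) / (2 * sqrt 2 + sqrt (1 + x)).

(* Main.v *)
Require Import Defs.
From Stdlib Require Import Reals Lra.
Open Scope R_scope.

Lemma incr (f f' : R -> R) a b : a < b ->
  (forall c, a <= c <= b -> derivable_pt_lim f c (f' c)) ->
  (forall c, a < c < b -> 0 < f' c) -> f a < f b.
Proof.
  intros Hab Hd Hp. destruct (MVT_cor2 f f' a b Hab Hd) as [c [E Hc]].
  assert (0 < f' c * (b - a)) by (apply Rmult_lt_0_compat; [apply Hp; lra | lra]). lra.
Qed.

Lemma PI_gt3 : 3 < PI. Proof. generalize PI2_3_2; lra. Qed.

Ltac finish H :=
  let l := match type of H with derivable_pt_lim _ _ ?l => l end in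
  match goal with |- derivable_pt_lim _ _ ?l' => replace l' with l;
    [exact H | cbv [mult_fct id plus_fct minus_fct fct_cte div_fct Rsqr] ] end.

Lemma dK2 c : derivable_pt_lim (fun u => sin u - u * cos u) c (c * sin c).
Proof.
  assert (H := derivable_pt_lim_minus sin (mult_fct id cos) c _ _ (derivable_pt_lim_sin c)
     (derivable_pt_lim_mult id cos c _ _ (derivable_pt_lim_id c) (derivable_pt_lim_cos c))).
  finish H. ring.
Qed.

Lemma dK1 c : derivable_pt_lim (fun u => 2 - 2 * cos u - u * sin u) c (sin c - c * cos c).
Proof.
  assert (H := derivable_pt_lim_minus (minus_fct (fct_cte 2) (mult_fct (fct_cte 2) cos)) (mult_fct id sin) c _ _
    (derivable_pt_lim_minus _ _ c _ _ (derivable_pt_lim_const 2 c)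
      (derivable_pt_lim_mult (fct_cte 2) cos c _ _ (derivable_pt_lim_const 2 c) (derivable_pt_lim_cos c)))
     (derivable_pt_lim_mult id sin c _ _ (derivable_pt_lim_id c) (derivable_pt_lim_sin c))).
  finish H. ring.
Qed.

Lemma dK c : derivable_pt_lim (fun u => u * (2 + cos u) - 3 * sin u) c (2 - 2 * cos c - c * sin c).
Proof.
  assert (H := derivable_pt_lim_minus (mult_fct id (plus_fct (fct_cte 2) cos)) (mult_fct (fct_cte 3) sin) c _ _
    (derivable_pt_lim_mult id _ c _ _ (derivable_pt_lim_id c)
      (derivable_pt_lim_plus _ _ c _ _ (derivable_pt_lim_const 2 c) (derivable_pt_lim_cos c)))
     (derivable_pt_lim_mult (fct_cte 3) sin c _ _ (derivable_pt_lim_const 3 c) (derivable_pt_lim_sin c))).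
  finish H. ring.
Qed.

Lemma dN c : derivable_pt_lim (fun u => 2 * sin u + sin u * cos u - u - 2 * u * cos u) c
   (2 * sin c * (c - sin c)).
Proof.
  assert (H := derivable_pt_lim_minus
    (minus_fct (plus_fct (mult_fct (fct_cte 2) sin) (mult_fct sin cos)) id)
    (mult_fct (mult_fct (fct_cte 2) id) cos) c _ _
    (derivable_pt_lim_minus _ _ c _ _
      (derivable_pt_lim_plus _ _ c _ _
        (derivable_pt_lim_mult (fct_cte 2) sin c _ _ (derivable_pt_lim_const 2 c) (derivable_pt_lim_sin c))
        (derivable_pt_lim_mult sin cos c _ _ (derivable_pt_lim_sin c) (derivable_pt_lim_cos c)))
      (derivable_pt_lim_id c))
    (derivable_pt_lim_mult _ cos c _ _
      (derivable_pt_lim_mult (fct_cte 2) id c _ _ (derivable_pt_lim_const 2 c) (derivable_pt_lim_id c))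
      (derivable_pt_lim_cos c))).
  finish H. assert (E := sin2_cos2 c). unfold Rsqr in E. nra.
Qed.

Definition h (u : R) := u * (2 + cos u) / sin u.

Lemma dh c : sin c <> 0 -> derivable_pt_lim h c
   ((2 * sin c + sin c * cos c - c - 2 * c * cos c) / (sin c * sin c)).
Proof.
  intro Hs.
  assert (H := derivable_pt_lim_div (mult_fct id (plus_fct (fct_cte 2) cos)) sin c _ _
    (derivable_pt_lim_mult id _ c _ _ (derivable_pt_lim_id c)
      (derivable_pt_lim_plus _ _ c _ _ (derivable_pt_lim_const 2 c) (derivable_pt_lim_cos c)))
    (derivable_pt_lim_sin c) Hs).
  finish H. assert (E := sin2_cos2 c). unfold Rsqr in E. unfold Rdiv. f_equal. assert (E2 : c*(sin c*sin c+cos c*cos c)=c) by (rewrite E; ring). nra.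
Qed.

Lemma K2pos u : 0 < u < PI -> 0 < sin u - u * cos u.
Proof.
  intros [H1 H2].
  assert (X := incr (fun u => sin u - u * cos u) (fun c => c * sin c) 0 u H1 (fun c _ => dK2 c)). cbv beta in X.
  rewrite sin_0, cos_0 in X. assert (0 < sin u - u * cos u). { apply (Rle_lt_trans _ (0 - 0*1)); [lra|].
  apply X. intros c Hc. apply Rmult_lt_0_compat; [lra| apply sin_gt_0; lra]. } lra.
Qed.

Lemma K1pos u : 0 < u < PI -> 0 < 2 - 2 * cos u - u * sin u.
Proof.
  intros [H1 H2].
  assert (X := incr _ _ 0 u H1 (fun c _ => dK1 c)). cbv beta in X.
  rewrite sin_0, cos_0 in X. apply (Rle_lt_trans _ (2 - 2*1 - 0*0)); [lra|].
  apply X. intros c Hc. apply K2pos; lra.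
Qed.

Lemma Kpos u : 0 < u < PI -> 3 * sin u < u * (2 + cos u).
Proof.
  intros [H1 H2].
  assert (X := incr _ _ 0 u H1 (fun c _ => dK c)). cbv beta in X.
  rewrite sin_0, cos_0 in X. cut (0 * (2 + 1) - 3 * 0 < u * (2 + cos u) - 3 * sin u). lra.
  apply X. intros c Hc. apply K1pos; lra.
Qed.

Lemma Npos u : 0 < u < PI -> 0 < 2 * sin u + sin u * cos u - u - 2 * u * cos u.
Proof.
  intros [H1 H2].
  assert (X := incr _ _ 0 u H1 (fun c _ => dN c)). cbv beta in X.
  rewrite sin_0, cos_0 in X. apply (Rle_lt_trans _ (2 * 0 + 0 * 1 - 0 - 2 * 0 * 1)); [lra|].
  apply X. intros c Hc. assert (sin c < c) by (apply sin_lt_x; lra).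
  assert (0 < sin c) by (apply sin_gt_0; lra).
  apply Rmult_lt_0_compat; lra.
Qed.

Lemma h_incr a b : 0 < a -> a < b -> b < PI -> h a < h b.
Proof.
  intros Ha Hab Hb.
  apply (incr h (fun c => (2 * sin c + sin c * cos c - c - 2 * c * cos c) / (sin c * sin c)) a b Hab).
  - intros c Hc. apply dh. assert (0 < sin c) by (apply sin_gt_0; lra). lra.
  - intros c Hc. assert (0 < sin c) by (apply sin_gt_0; lra).
    apply Rdiv_lt_0_compat. apply Npos; lra. apply Rmult_lt_0_compat; lra.
Qed.

Lemma sqrt2_pos : 0 < sqrt 2. Proof. apply sqrt_lt_R0; lra. Qed.

Lemma bridge u : 0 < u < PI / 2 ->
  F3 (cos (2 * u)) = 2 * h u /\ g3 (cos (2 * u)) = sin u / (2 + cos u) /\ acos (cos (2*u)) = 2 * u.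
Proof.
  intros Hu. generalize PI_gt3; intro HP.
  assert (Hs : 0 < sin u) by (apply sin_gt_0; lra).
  assert (Hc : 0 < cos u) by (apply cos_gt_0; lra).
  assert (E1 : sqrt (1 - cos (2*u)) = sqrt 2 * sin u).
  { rewrite cos_2a_sin. replace (1 - (1 - 2 * sin u * sin u)) with (2 * (sin u * sin u)) by ring.
    rewrite sqrt_mult by nra. rewrite sqrt_square; lra. }
  assert (E2 : sqrt (1 + cos (2*u)) = sqrt 2 * cos u).
  { rewrite cos_2a_cos. replace (1 + (2 * cos u * cos u - 1)) with (2 * (cos u * cos u)) by ring.
    rewrite sqrt_mult by nra. rewrite sqrt_square; lra. }
  assert (E3 : acos (cos (2*u)) = 2 * u) by (apply acos_cos; lra).
  generalize sqrt2_pos; intro Q.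
  unfold F3, g3, h. rewrite E1, E2, E3. split; [|split; [|reflexivity]].
  - assert (0 < sqrt 2 * cos u) by (apply Rmult_lt_0_compat; lra).
    assert (0 < sqrt 2 * sin u) by (apply Rmult_lt_0_compat; lra). field. repeat split; lra.
  - assert (0 < sqrt 2 * cos u) by (apply Rmult_lt_0_compat; lra).
    assert (0 < sqrt 2 * sin u) by (apply Rmult_lt_0_compat; lra). field. repeat split; lra.
Qed.

Lemma param x : 0 < x < 1 -> exists u, 0 < u < PI / 4 /\ x = cos (2 * u).
Proof.
  intros Hx. generalize PI_gt3; intro HP.
  destruct (acos_bound_lt x) as [A1 A2]; [lra|].
  exists (acos x / 2).
  replace (2 * (acos x / 2)) with (acos x) by field. rewrite cos_acos by lra.
  split; [|reflexivity]. split; [lra|].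
  destruct (Rlt_le_dec (acos x) (PI/2)). lra.
  assert (cos (acos x) <= 0) by (apply cos_le_0; lra). rewrite cos_acos in H by lra. lra.
Qed.

Lemma h_PI4 : 2 * h (PI / 4) = (1/2 + sqrt 2) * PI.
Proof.
  unfold h. rewrite cos_PI4, sin_PI4. generalize sqrt2_pos; intro Q.
  assert (sqrt 2 * sqrt 2 = 2) by (apply sqrt_sqrt; lra).
  field_simplify; try lra.
Qed.

Lemma cos_lb u : 0 < u -> 1 - u * u / 2 <= cos u.
Proof.
  intro Hu. replace u with (2 * (u/2)) at 3 by field. rewrite cos_2a_sin.
  assert (sin (u/2) < u/2) by (apply sin_lt_x; lra).
  assert (- (u/2) <= sin (u/2)).
  { destruct (Rle_dec 0 (sin (u/2))). lra. 
    assert (-1 <= sin (u/2)) by apply SIN_bound. generalize PI_gt3; intro.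
    destruct (Rle_dec (u/2) PI). assert (0 <= sin (u/2)) by (apply sin_ge_0; lra). lra.
    lra. }
  nra.
Qed.

Theorem theorem3 :
  (forall x y : R, 0 < x -> x < y -> y < 1 -> F3 y < F3 x) /\
  (forall x : R, 0 < x < 1 ->
     6 * g3 x < acos x /\ acos x < (1/2 + sqrt 2) * PI * g3 x) /\
  (forall c : R, (forall x : R, 0 < x < 1 -> c * g3 x <= acos x) -> c <= 6) /\
  (forall c : R, (forall x : R, 0 < x < 1 -> acos x <= c * g3 x) ->
     (1/2 + sqrt 2) * PI <= c).
Proof.
  generalize PI_gt3; intro HP.
  split; [|split; [|split]].
  - intros x y Hx Hxy Hy.
    destruct (param x) as [ux [Hux Ex]]; [lra|].
    destruct (param y) as [uy [Huy Ey]]; [lra|].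
    assert (uy < ux).
    { destruct (Rlt_le_dec uy ux) as [|Hle]; [assumption|].
      destruct (Req_dec ux uy) as [Heq|Hne]. subst. lra.
      assert (cos (2*uy) < cos (2*ux)) by (apply cos_decreasing_1; lra). lra. }
    destruct (bridge ux) as [Fx _]; [lra|]. destruct (bridge uy) as [Fy _]; [lra|].
    rewrite Ex, Ey, Fx, Fy. assert (h uy < h ux) by (apply h_incr; lra). lra.
  - intros x Hx. destruct (param x) as [u [Hu Ex]]; [lra|].
    destruct (bridge u) as [_ [G A]]; [lra|]. subst x. rewrite G, A.
    assert (Hs : 0 < sin u) by (apply sin_gt_0; lra).
    assert (Hc : 0 < cos u) by (apply cos_gt_0; lra).
    assert (Hq : 0 < sin u / (2 + cos u)) by (apply Rdiv_lt_0_compat; lra).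
    split.
    + assert (K := Kpos u ltac:(lra)).
      apply (Rmult_lt_reg_r (2 + cos u)); [lra|].
      replace (6 * (sin u / (2 + cos u)) * (2 + cos u)) with (6 * sin u) by (field; lra). nra.
    + rewrite <- h_PI4. assert (Hh : h u < h (PI/4)) by (apply h_incr; lra).
      apply (Rle_lt_trans _ (2 * h u * (sin u / (2 + cos u)))).
      * unfold h. apply Req_le. field. lra.
      * apply Rmult_lt_compat_r; lra.
  - intros c Hc. destruct (Rle_dec c 6) as [|Hn]; [assumption|]. exfalso.
    set (r := 6 / c). assert (Hr0 : 0 < r) by (apply Rdiv_lt_0_compat; lra).
    assert (Hr1 : r < 1) by (unfold r; apply (Rmult_lt_reg_r c); [lra|]; field_simplify; lra).
    set (u := Rmin (1/2) (1 - r)).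
    assert (Hu1 : u <= 1/2) by apply Rmin_l. assert (Hu2 : u <= 1 - r) by apply Rmin_r.
    assert (Hu0 : 0 < u) by (apply Rmin_glb_lt; lra).
    assert (Hco : r < cos u) by (generalize (cos_lb u Hu0); nra).
    destruct (bridge u) as [_ [G A]]; [lra|].
    assert (Hx : 0 < cos (2 * u) < 1).
    { split. apply cos_gt_0; lra. rewrite cos_2a_sin. assert (0 < sin u) by (apply sin_gt_0; lra). nra. }
    specialize (Hc _ Hx). rewrite G, A in Hc.
    assert (Hs : 0 < sin u) by (apply sin_gt_0; lra).
    assert (Hc1 : cos u <= 1) by apply COS_bound.
    assert (K2 := K2pos u ltac:(lra)).
    assert (c * sin u <= 2 * u * (2 + cos u)).
    { replace (c * sin u) with (c * (sin u / (2 + cos u)) * (2 + cos u)) by (field; lra). nra. }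
    assert (c * r = 6) by (unfold r; field; lra).
    nra.
  - intros c Hc. set (a := sqrt 2). assert (Ha : 0 < a) by apply sqrt2_pos.
    assert (Haa : a * a = 2) by (apply sqrt_sqrt; lra).
    destruct (Rle_dec ((1/2 + a) * PI) c) as [|Hn]; [assumption|]. exfalso.
    set (d := Rmin (PI/8) (((1/2 + a) * PI - c) / (4 * (2 * a + 1)))).
    assert (Hd1 : d <= PI/8) by apply Rmin_l.
    assert (Hd2 : d <= ((1/2 + a) * PI - c) / (4 * (2 * a + 1))) by apply Rmin_r.
    assert (Hd0 : 0 < d).
    { apply Rmin_glb_lt. lra. apply Rdiv_lt_0_compat; lra. }
    set (u := PI/4 - d).
    destruct (bridge u) as [_ [G A]]; [unfold u; lra|].
    assert (Hx : 0 < cos (2 * u) < 1).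
    { split. apply cos_gt_0; unfold u; lra. rewrite cos_2a_sin. assert (0 < sin u) by (apply sin_gt_0; unfold u; lra). nra. }
    specialize (Hc _ Hx). rewrite G, A in Hc.
    assert (Hs : 0 < sin u) by (apply sin_gt_0; unfold u; lra).
    assert (Hco : 0 < cos u) by (apply cos_gt_0; unfold u; lra).
    assert (Hs2 : sin u < 1 / a).
    { replace (1/a) with (sin (PI/4)) by (rewrite sin_PI4; reflexivity). apply sin_increasing_1; unfold u; lra. }
    assert (Hc2 : 1 / a < cos u).
    { replace (1/a) with (cos (PI/4)) by (rewrite cos_PI4; reflexivity). apply cos_decreasing_1; unfold u; lra. }
    assert (Hsa : sin u * a < 1) by (apply (Rmult_lt_compat_r a) in Hs2; [|lra]; field_simplify in Hs2; lra).
    assert (Hca : 1 < cos u * a) by (apply (Rmult_lt_compat_r a) in Hc2; [|lra]; field_simplify in Hc2; lra).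
    assert (H1 : 2 * u * (2 + cos u) <= c * sin u).
    { replace (c * sin u) with (c * (sin u / (2 + cos u)) * (2 + cos u)) by (field; lra). nra. }
    assert (Hd3 : d * (4 * (2 * a + 1)) <= (1/2 + a) * PI - c).
    { apply (Rmult_le_compat_r (4 * (2 * a + 1))) in Hd2; [|lra]. field_simplify in Hd2; lra. }
    assert (H2 : 2 * u * (2 * a + 1) < c).
    { assert (0 < u) by (unfold u; lra).
      destruct (Rle_dec c 0). nra.
      assert (E1 : 2 * u * (2 + cos u) * a <= c * sin u * a) by (apply Rmult_le_compat_r; lra).
      assert (E2 : c * (sin u * a) < c * 1) by (apply Rmult_lt_compat_l; lra).
      assert (E3 : 2 * u * 1 < 2 * u * (cos u * a)) by (apply Rmult_lt_compat_l; lra).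
      nra. }
    unfold u in H2. nra.
Qed.
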